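(* Let $f$ be a positive function with $f(u)\to0$ as $u\to\infty$ which is eventually $C^1$, decreasing, and strictly convex. Suppose that either $f$ is regularly varying of index $-\alpha$ for some $0<\alpha\le 1$ (i.e. $f(\lambda u)/f(u)\to\lambda^{-\alpha}$ as $u\to\infty$ for every $\lambda>0$), or $f$ is slowly varying (i.e. $f(\lambda u)/f(u)\to1$ for every $\lambda>0$) and satisfies $\limsup_{u\to\infty}\frac{|f'((1+\delta)u)|}{|f'(u)|}<1$ for every $\delta>0$. Then for every $\lambda>1$ there exist $\delta>0$ and $x_0\ge1$ such that for all $x\ge x_0$ and all $u$ with $u\ge\lambda u_0(x)$ or $u\le(1/\lambda)u_0(x)$, \[h(u,x)-uf(u)\ge\omega(x)+\delta u_0(x).\]
   Context: $h(u,x)=f(u)\log x+u$, $\omega(x)=\inf_{u\ge0}h(u,x)$, and for $x$ sufficiently large $u_0(x)$ denotes the unique point at which $u\mapsto h(u,x)$ attains its minimum (the unique solution of $f'(u)=-1/\log x$), so $\omega(x)=h(u_0(x),x)$. *)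

(* Defs.v *)
From Stdlib Require Export Reals.
From Coquelicot Require Export Coquelicot.
Open Scope R_scope.

Definition h (f : R -> R) (u x : R) : R := f u * ln x + u.

(* omega(x) = inf_{u >= 0} h(u,x)  (greatest lower bound in the extended reals,
   projected to R; for large x it is attained at u_0(x), hence finite). *)
Definition omega (f : R -> R) (x : R) : R :=
  real (Glb_Rbar (fun y => exists u, 0 <= u /\ y = h f u x)).

Definition is_min_h (f : R -> R) (x v : R) : Prop :=
  0 <= v /\ forall u, 0 <= u -> h f v x <= h f u x.

(* Main.v *)
Require Import Defs.
From Stdlib Require Import Reals Lra Psatz Classical.
From Coquelicot Require Import Coquelicot.
Open Scope R_scope.


Lemma lim_eps (g : R -> R) v : is_lim g p_infty (Finite v) ->
  forall eps, 0 < eps -> exists M, forall u, M <= u -> Rabs (g u - v) < eps.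
Proof.
  intros H eps He. apply is_lim_spec in H.
  destruct (H (mkposreal eps He)) as [M HM]. exists (M+1). intros u Hu.
  apply HM. lra.
Qed.

Lemma omega_eq f x v : is_min_h f x v -> omega f x = h f v x.
Proof.
  intros [H0 H]. unfold omega.
  rewrite (is_glb_Rbar_unique _ (Finite (h f v x))); [reflexivity|].
  split.
  - intros y [u [Hu ->]]. simpl. apply H; auto.
  - intros b Hb. apply Hb. exists v; split; auto.
Qed.

Definition Setup (f u0 : R -> R) (X : R) : Prop :=
  1 < X /\ (forall u, 0 <= u -> 0 < f u) /\ (forall x, X <= x -> is_min_h f x (u0 x))
  /\ (forall eps, 0 < eps -> exists M, forall u, M <= u -> f u <= eps).

Lemma lnpos x X : 1 < X -> X <= x -> 0 < ln x.
Proof. intros. rewrite <- ln_1. apply ln_increasing; lra. Qed.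

Lemma u0_nonneg f u0 X x : Setup f u0 X -> X <= x -> 0 <= u0 x.
Proof. intros (_&_&Hm&_) Hx. apply (Hm x Hx). Qed.

Lemma u0_le_g f u0 X x : Setup f u0 X -> X <= x -> u0 x <= h f (u0 x) x.
Proof.
  intros S Hx. pose proof (u0_nonneg _ _ _ _ S Hx).
  destruct S as (HX&Hp&Hm&_). unfold h.
  pose proof (Hp _ H). pose proof (lnpos x X HX Hx). nra.
Qed.

Lemma F1 f u0 X x x' : Setup f u0 X -> X <= x -> x <= x' -> u0 x <= u0 x'.
Proof.
  intros S Hx Hxx.
  destruct (Req_dec x x') as [<-|Hne]; [lra|].
  pose proof (u0_nonneg _ _ _ _ S Hx) as P0.
  pose proof (u0_nonneg _ _ _ _ S (Rle_trans _ _ _ Hx Hxx)) as P1.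
  destruct S as (HX&Hp&Hm&_).
  assert (HL : ln x < ln x') by (apply ln_increasing; lra).
  pose proof (lnpos x X HX Hx).
  destruct (Hm x Hx) as [_ H1]. destruct (Hm x' (Rle_trans _ _ _ Hx Hxx)) as [_ H2].
  specialize (H1 (u0 x') P1). specialize (H2 (u0 x) P0). unfold h in *.
  assert (f (u0 x') <= f (u0 x)) by nra. nra.
Qed.

Lemma F2 f u0 X : Setup f u0 X -> forall eps, 0 < eps ->
  exists x1, X <= x1 /\ forall x, x1 <= x -> h f (u0 x) x <= eps * ln x.
Proof.
  intros S eps He. destruct S as (HX&Hp&Hm&Hf).
  destruct (Hf (eps/2)) as [M HM]; [lra|].
  set (v := Rmax M 0).
  exists (Rmax X (exp (2*v/eps))). split; [apply Rmax_l|]. intros x Hx.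
  assert (HXx : X <= x) by (eapply Rle_trans; [apply Rmax_l|exact Hx]).
  assert (He2 : exp (2*v/eps) <= x) by (eapply Rle_trans; [apply Rmax_r|exact Hx]).
  assert (Hl : 2*v/eps <= ln x).
  { rewrite <- (ln_exp (2*v/eps)). apply ln_le; [apply exp_pos|exact He2]. }
  assert (v0 : 0 <= v) by apply Rmax_r.
  assert (vM : M <= v) by apply Rmax_l.
  destruct (Hm x HXx) as [_ H]. specialize (H v v0).
  specialize (HM v vM). pose proof (lnpos x X HX HXx).
  unfold h in *.
  assert (2*v <= eps * ln x).
  { apply Rmult_le_compat_l with (r:=eps) in Hl; [|lra].
    replace (eps * (2*v/eps)) with (2*v) in Hl by (field; lra). lra. }
  nra.
Qed.

Lemma F3 f u0 X : Setup f u0 X -> forall u x', 0 <= u -> X <= x' ->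
  u0 x' - u <= f u * ln x'.
Proof.
  intros S u x' Hu Hx. pose proof (u0_nonneg _ _ _ _ S Hx).
  destruct S as (HX&Hp&Hm&Hf). destruct (Hm x' Hx) as [_ H1].
  specialize (H1 u Hu). unfold h in H1. pose proof (Hp _ H).
  pose proof (lnpos _ _ HX Hx). nra.
Qed.

Lemma F4 f u0 X : Setup f u0 X ->
  exists x1, X <= x1 /\ forall x u, x1 <= x -> ln x <= u -> ln x <= h f u x - u * f u.
Proof.
  intros S. destruct S as (HX&Hp&Hm&Hf).
  destruct (Hf (1/2)) as [M HM]; [lra|].
  exists (Rmax X (exp M)). split; [apply Rmax_l|]. intros x u Hx Hu.
  assert (HXx : X <= x) by (eapply Rle_trans; [apply Rmax_l|exact Hx]).
  assert (He2 : exp M <= x) by (eapply Rle_trans; [apply Rmax_r|exact Hx]).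
  assert (Hl : M <= ln x).
  { rewrite <- (ln_exp M). apply ln_le; [apply exp_pos|exact He2]. }
  pose proof (lnpos x X HX HXx).
  specialize (HM u ltac:(lra)). pose proof (Hp u ltac:(lra)).
  unfold h. nra.
Qed.

Definition Concl (f u0 : R -> R) X l := exists d, 0 < d /\ exists x0, 1 <= x0 /\ X <= x0 /\
  forall x u, x0 <= x -> 0 <= u -> (l * u0 x <= u \/ u <= u0 x / l) ->
  h f u x - u * f u >= h f (u0 x) x + d * u0 x.

Lemma Rmax_le_l a b c : Rmax a b <= c -> a <= c.
Proof. intros. eapply Rle_trans; [apply Rmax_l|eauto]. Qed.
Lemma Rmax_le_r a b c : Rmax a b <= c -> b <= c.
Proof. intros. eapply Rle_trans; [apply Rmax_r|eauto]. Qed.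

Lemma exp_ln_le y x : 0 < x -> exp y <= x -> y <= ln x.
Proof. intros. rewrite <- (ln_exp y). apply ln_le; [apply exp_pos|auto]. Qed.

Lemma bounded_case f u0 X l : Setup f u0 X -> 1 < l ->
  (exists M, forall x, X <= x -> u0 x <= M) -> Concl f u0 X l.
Proof.
  intros S Hl [M HM].
  pose proof S as (HX&Hp&Hm&Hf).
  set (E := fun y => exists x, X <= x /\ y = u0 x).
  destruct (completeness E) as [us [Hub Hlub]].
  { exists M. intros y [x [Hx ->]]. auto. }
  { exists (u0 X). exists X. split; [lra|auto]. }
  assert (Hle : forall x, X <= x -> u0 x <= us).
  { intros x Hx. apply Hub. exists x; auto. }
  assert (Happ : forall eta, 0 < eta -> exists x1, X <= x1 /\ forall x, x1 <= x -> us - eta < u0 x).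
  { intros eta He. destruct (Classical_Prop.classic (exists x1, X <= x1 /\ us - eta < u0 x1)) as [[x1 [H1 H2]]|Hn].
    - exists x1. split; auto. intros x Hx. pose proof (F1 _ _ _ _ _ S H1 Hx). lra.
    - exfalso. assert (us <= us - eta); [|lra]. apply Hlub. intros y [x [Hx ->]].
      apply Rnot_lt_le. intro. apply Hn. exists x; auto. }
  assert (Hfz : forall eps, 0 < eps -> exists x1, X <= x1 /\ forall x, x1 <= x -> f (u0 x) <= eps).
  { intros eps He. destruct (F2 _ _ _ S eps He) as [x1 [H1 H2]]. exists x1. split; auto.
    intros x Hx. specialize (H2 x Hx). unfold h in H2.
    pose proof (u0_nonneg _ _ _ _ S (Rle_trans _ _ _ H1 Hx)).
    pose proof (lnpos x X HX ltac:(lra)). nra. }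
  assert (HLf : forall x, X <= x -> f (u0 x) * ln x <= us - u0 x).
  { intros x Hx. pose proof (lnpos x X HX Hx).
    apply Rle_plus_epsilon. intros eta He.
    destruct (Hfz (eta / ln x)) as [x1 [H1 H2]]. { apply Rdiv_lt_0_compat; lra. }
    set (x' := Rmax x x1).
    assert (Hx' : x <= x') by apply Rmax_l.
    specialize (H2 x' (Rmax_r _ _)).
    destruct (Hm x Hx) as [_ Hmin].
    assert (HXx' : X <= x') by lra.
    specialize (Hmin (u0 x') (u0_nonneg _ _ _ _ S HXx')). unfold h in Hmin.
    pose proof (Hle x' HXx').
    assert (f (u0 x') * ln x <= eta).
    { apply Rmult_le_compat_r with (r := ln x) in H2; [|lra].
      replace (eta / ln x * ln x) with eta in H2 by (field; lra). lra. }
    lra. }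
  assert (Hus : 0 < us).
  { apply Rnot_le_lt. intro Hn.
    assert (Hz : forall x, X <= x -> u0 x = 0).
    { intros x Hx. pose proof (Hle x Hx). pose proof (u0_nonneg _ _ _ _ S Hx). lra. }
    pose proof (Hp 0 (Rle_refl 0)).
    destruct (Hfz (f 0 / 2)) as [x1 [H1 H2]]; [lra|].
    specialize (H2 x1 (Rle_refl _)). rewrite (Hz x1 H1) in H2. lra. }
  set (eta := (l-1)*us/(l+1)).
  destruct (Happ eta) as [xA [HA1 HA2]]. { unfold eta. apply Rdiv_lt_0_compat; nra. }
  set (eta' := us*(1-/l)/2).
  assert (Hinvl : 0 < /l < 1). { split. apply Rinv_0_lt_compat; lra. rewrite <- Rinv_1. apply Rinv_lt_contravar; lra. }
  destruct (Happ eta') as [xp [Hp1 Hp2]]. { unfold eta'. nra. }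
  specialize (Hp2 xp (Rle_refl _)).
  pose proof (lnpos xp X HX Hp1) as Hlnp.
  set (c1 := (u0 xp - us / l) / ln xp).
  assert (Hc1 : 0 < c1).
  { unfold c1. apply Rdiv_lt_0_compat; [|lra]. unfold eta' in Hp2. unfold Rdiv. nra. }
  assert (Hfc1 : forall u, 0 <= u -> u <= us / l -> c1 <= f u).
  { intros u Hu0 Hu1. pose proof (F3 _ _ _ S u xp Hu0 Hp1).
    unfold c1. apply Rmult_le_reg_r with (r := ln xp); [lra|].
    unfold Rdiv. rewrite Rmult_assoc, Rinv_l, Rmult_1_r; lra. }
  set (d := (l-1)/2).
  set (e1 := Rmin (/(1+d)) (c1/(2*(1+d)))).
  assert (Hd : 0 < d) by (unfold d; lra).
  assert (He1 : 0 < e1).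
  { unfold e1. apply Rmin_pos. apply Rinv_0_lt_compat; lra. apply Rdiv_lt_0_compat; lra. }
  destruct (F2 _ _ _ S e1 He1) as [xB [HB1 HB2]].
  destruct (F4 _ _ _ S) as [xC [HC1 HC2]].
  exists d. split; [exact Hd|].
  set (x0 := Rmax (Rmax xA xB) (Rmax xC (Rmax 1 (exp (2*us))))).
  exists x0. split. { unfold x0. eapply Rle_trans; [|apply Rmax_r]. eapply Rle_trans; [|apply Rmax_r]. apply Rmax_l. }
  split. { unfold x0. eapply Rle_trans; [|apply Rmax_l]. eapply Rle_trans; [|apply Rmax_l]. exact HA1. }
  intros x u Hx Hu Hcase. unfold x0 in Hx.
  assert (HxA : xA <= x) by (apply Rmax_le_l, Rmax_le_l in Hx; exact Hx).
  assert (HxB : xB <= x) by (apply Rmax_le_l, Rmax_le_r in Hx; exact Hx).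
  assert (HxC : xC <= x) by (apply Rmax_le_r, Rmax_le_l in Hx; exact Hx).
  assert (HxD : exp (2*us) <= x) by (apply Rmax_le_r, Rmax_le_r, Rmax_le_r in Hx; exact Hx).
  assert (HXx : X <= x) by lra.
  pose proof (lnpos x X HX HXx) as HL.
  assert (HL2 : 2*us <= ln x) by (apply exp_ln_le; lra).
  specialize (HB2 x HxB). specialize (HA2 x HxA).
  pose proof (u0_le_g _ _ _ _ S HXx) as Hug.
  pose proof (HLf x HXx) as HLfx.
  pose proof (u0_nonneg _ _ _ _ S HXx) as Hu0p.
  assert (Hg1 : (1+d) * h f (u0 x) x <= ln x).
  { assert (e1 <= /(1+d)) by apply Rmin_l.
    assert (h f (u0 x) x <= /(1+d) * ln x) by nra.
    apply Rmult_le_compat_l with (r := 1+d) in H0; [|lra].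
    rewrite <- Rmult_assoc, Rinv_r in H0; lra. }
  assert (Hg2 : (1+d) * h f (u0 x) x <= c1 / 2 * ln x).
  { assert (e1 <= c1/(2*(1+d))) by apply Rmin_r.
    assert (h f (u0 x) x <= c1/(2*(1+d)) * ln x) by nra.
    apply Rmult_le_compat_l with (r := 1+d) in H0; [|lra].
    replace ((1 + d) * (c1 / (2 * (1 + d)) * ln x)) with (c1/2 * ln x) in H0 by (field; lra).
    lra. }
  apply Rle_ge.
  destruct (Rle_lt_dec (ln x) u) as [HuL|HuL].
  { specialize (HC2 x u HxC HuL). nra. }
  destruct Hcase as [Hc|Hc].
  -
    assert (Hfu : 0 < f u) by (apply Hp; lra).
    assert (h f u x - u * f u >= u) by (unfold h; nra).
    unfold h in HLfx |- *. unfold eta in HA2.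
    assert ((l+1) * u0 x >= 2 * us).
    { assert ((l+1) * (us - (l-1)*us/(l+1)) = 2 * us) by (field; lra). nra. }
    unfold d. unfold h in H. nra.
  - assert (Hu1 : u <= us / l).
    { pose proof (Hle x HXx). unfold Rdiv in *. nra. }
    pose proof (Hfc1 u Hu Hu1) as Hfu.
    assert (us / l <= us) by (unfold Rdiv; nra).
    assert (h f u x - u * f u >= c1 * (ln x - u)) by (unfold h; nra).
    nra.
Qed.

Definition ConvG (f : R -> R) a := forall s t th, a < s -> a < t -> 0 <= th <= 1 ->
  f (th * s + (1 - th) * t) <= th * f s + (1 - th) * f t.

Lemma conv_general f a : (forall s t th, a < s -> s < t -> 0 < th < 1 ->
             f (th * s + (1 - th) * t) < th * f s + (1 - th) * f t) -> ConvG f a.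
Proof.
  intros H s t th Hs Ht Hth.
  destruct (Req_dec th 0) as [->|H0].
  { replace (0*s + (1-0)*t) with t by ring. lra. }
  destruct (Req_dec th 1) as [->|H1].
  { replace (1*s + (1-1)*t) with s by ring. lra. }
  destruct (Rtotal_order s t) as [Hst|[->|Hst]].
  - left. apply H; auto; lra.
  - replace (th*t + (1-th)*t) with t by ring. lra.
  - left. assert (Hth' : 0 < 1 - th < 1) by lra. specialize (H t s (1-th) Ht Hst Hth').
    replace (th * s + (1 - th) * t) with ((1-th)*t + (1-(1-th))*s) by ring. lra.
Qed.

Lemma hconv f a x p q r : ConvG f a -> 0 <= ln x -> a < p -> p < q -> q < r ->
  h f q x * (r - p) <= (r - q) * h f p x + (q - p) * h f r x.
Proof.
  intros Hc HL Hp Hpq Hqr.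
  set (th := (r-q)/(r-p)).
  assert (Hth : 0 <= th <= 1).
  { unfold th. split. apply Rcomplements.Rdiv_le_0_compat; lra.
    assert (Hrp : 0 < r - p) by lra. apply (proj1 (Rcomplements.Rdiv_le_1 _ _ Hrp)); lra. }
  assert (Hq : q = th * p + (1-th) * r) by (unfold th; field; lra).
  assert (Har : a < r) by lra. specialize (Hc p r th Hp Har Hth). rewrite <- Hq in Hc.
  assert (E1 : th * (r - p) = r - q) by (unfold th; field; lra).
  assert (E2 : (1-th) * (r - p) = q - p) by (unfold th; field; lra).
  unfold h.
  assert (f q * (r-p) <= (r-q) * f p + (q-p) * f r).
  { rewrite <- E1, <- E2. nra. }
  nra.
Qed.

Lemma unbounded_case f u0 X l a : Setup f u0 X -> 1 < l -> 0 <= a -> ConvG f a ->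
  (forall M, exists x, X <= x /\ M <= u0 x) ->
  (exists C, 0 < C /\ exists x2, X <= x2 /\ forall x, x2 <= x ->
     a < u0 x / l /\ h f (l * u0 x) x >= h f (u0 x) x + C * u0 x /\
     h f (u0 x / l) x >= h f (u0 x) x + C * u0 x) ->
  Concl f u0 X l.
Proof.
  intros S Hl Ha Hc Unb [C [HC [x2 [Hx2 Core]]]].
  pose proof S as (HX&Hp&Hm&Hf).
  assert (Ev : forall M, exists x1, X <= x1 /\ forall x, x1 <= x -> M <= u0 x).
  { intros M. destruct (Unb M) as [x1 [H1 H2]]. exists x1. split; auto.
    intros x Hx. pose proof (F1 _ _ _ _ _ S H1 Hx). lra. }
  destruct (Unb (a+1)) as [xp [Hp1 Hp2]].
  pose proof (lnpos xp X HX Hp1) as Hlnp.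
  set (c1 := / ln xp).
  assert (Hc1 : 0 < c1) by (apply Rinv_0_lt_compat; lra).
  assert (Hfc1 : forall u, 0 <= u -> u <= a -> c1 <= f u).
  { intros u Hu0 Hu1. pose proof (F3 _ _ _ S u xp Hu0 Hp1).
    unfold c1. apply Rmult_le_reg_r with (r := ln xp); [lra|].
    rewrite Rinv_l; lra. }
  set (d := C/2).
  assert (Hd : 0 < d) by (unfold d; lra).
  set (e1 := Rmin (Rmin (/(1+d)) (c1/(2*(1+d)))) (C/(2*(1+C)))).
  assert (He1 : 0 < e1).
  { unfold e1. apply Rmin_pos; [apply Rmin_pos|]. apply Rinv_0_lt_compat; lra.
    apply Rdiv_lt_0_compat; lra. apply Rdiv_lt_0_compat; lra. }
  destruct (F2 _ _ _ S e1 He1) as [xB [HB1 HB2]].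
  destruct (F4 _ _ _ S) as [xC [HC1 HC2]].
  destruct (Hf (C/(2*l))) as [M2 HM2]. { apply Rdiv_lt_0_compat; lra. }
  destruct (Ev M2) as [xE [HE1 HE2]].
  exists d. split; [exact Hd|].
  set (x0 := Rmax (Rmax x2 xB) (Rmax (Rmax xC xE) (Rmax 1 (exp (2*a))))).
  exists x0. split. { unfold x0. eapply Rle_trans; [|apply Rmax_r]. eapply Rle_trans; [|apply Rmax_r]. apply Rmax_l. }
  split. { unfold x0. eapply Rle_trans; [|apply Rmax_l]. eapply Rle_trans; [|apply Rmax_l]. exact Hx2. }
  intros x u Hx Hu Hcase. unfold x0 in Hx.
  assert (Hx2' : x2 <= x) by (apply Rmax_le_l, Rmax_le_l in Hx; exact Hx).
  assert (HxB : xB <= x) by (apply Rmax_le_l, Rmax_le_r in Hx; exact Hx).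
  assert (HxC : xC <= x) by (apply Rmax_le_r, Rmax_le_l, Rmax_le_l in Hx; exact Hx).
  assert (HxE : xE <= x) by (apply Rmax_le_r, Rmax_le_l, Rmax_le_r in Hx; exact Hx).
  assert (HxD : exp (2*a) <= x) by (apply Rmax_le_r, Rmax_le_r, Rmax_le_r in Hx; exact Hx).
  assert (HXx : X <= x) by lra.
  pose proof (lnpos x X HX HXx) as HL.
  assert (HL2 : 2*a <= ln x) by (apply exp_ln_le; lra).
  specialize (HB2 x HxB). specialize (HE2 x HxE).
  destruct (Core x Hx2') as [Hau [Hup Hlow]].
  pose proof (u0_le_g _ _ _ _ S HXx) as Hug.
  pose proof (u0_nonneg _ _ _ _ S HXx) as Hu0p.
  set (g := h f (u0 x) x) in *.
  assert (Hinvl : 0 < /l < 1). { split. apply Rinv_0_lt_compat; lra. rewrite <- Rinv_1. apply Rinv_lt_contravar; lra. }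
  assert (Hal : a < u0 x) by (unfold Rdiv in Hau; nra).
  assert (Hg1 : (1+d) * g <= ln x).
  { assert (e1 <= /(1+d)) by (eapply Rle_trans; [apply Rmin_l|apply Rmin_l]).
    assert (g <= /(1+d) * ln x) by nra.
    apply Rmult_le_compat_l with (r := 1+d) in H0; [|lra].
    rewrite <- Rmult_assoc, Rinv_r in H0; lra. }
  assert (Hg2 : (1+d) * g <= c1 / 2 * ln x).
  { assert (e1 <= c1/(2*(1+d))) by (eapply Rle_trans; [apply Rmin_l|apply Rmin_r]).
    assert (g <= c1/(2*(1+d)) * ln x) by nra.
    apply Rmult_le_compat_l with (r := 1+d) in H0; [|lra].
    replace ((1 + d) * (c1 / (2 * (1 + d)) * ln x)) with (c1/2 * ln x) in H0 by (field; lra).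
    lra. }
  assert (Hg3 : (1+C) * g <= C / 2 * ln x).
  { assert (e1 <= C/(2*(1+C))) by apply Rmin_r.
    assert (g <= C/(2*(1+C)) * ln x) by nra.
    apply Rmult_le_compat_l with (r := 1+C) in H0; [|lra].
    replace ((1 + C) * (C / (2 * (1 + C)) * ln x)) with (C/2 * ln x) in H0 by (field; lra).
    lra. }
  apply Rle_ge.
  destruct (Rle_lt_dec (ln x) u) as [HuL|HuL].
  { specialize (HC2 x u HxC HuL). fold g. assert (d * u0 x <= d * g) by nra. nra. }
  destruct (Rle_lt_dec u a) as [Hua|Hua].
  { pose proof (Hfc1 u Hu Hua) as Hfu.
    assert (h f u x - u * f u >= c1 * (ln x - u)) by (unfold h; nra).
    fold g. assert (d * u0 x <= d * g) by nra. nra. }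
  destruct Hcase as [Hc'|Hc'].
  -
    assert (Hr : l * (h f u x - g) >= C * u).
    { destruct (Req_dec u (l * u0 x)) as [->|Hne].
      - nra.
      - assert (HL0 : 0 <= ln x) by lra. assert (Hq1 : u0 x < l * u0 x) by nra.
        assert (Hq2 : l * u0 x < u) by lra.
        pose proof (hconv f a x (u0 x) (l * u0 x) u Hc HL0 Hal Hq1 Hq2) as Hh.
        fold g in Hh.
        assert ((l-1) * (h f u x - g) >= C * (u - u0 x)) by nra.
        nra. }
    assert (Hfu : f u <= C/(2*l)) by (apply HM2; nra).
    assert (Hfu' : l * (u * f u) <= C/2 * u).
    { apply Rmult_le_compat_l with (r := u * l) in Hfu; [|nra].
      replace (u * l * (C / (2 * l))) with (C/2 * u) in Hfu by (field; lra). nra. }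
    unfold d. nra.
  -
    assert (Hhu : h f u x >= g + C * u0 x).
    { destruct (Req_dec u (u0 x / l)) as [->|Hne]; [exact Hlow|].
      assert (Hq : u0 x / l < u0 x) by (unfold Rdiv; nra).
      assert (HL0 : 0 <= ln x) by lra. assert (Hq1 : u < u0 x / l) by lra.
      pose proof (hconv f a x u (u0 x / l) (u0 x) Hc HL0 Hua Hq1 Hq) as Hh.
      fold g in Hh.
      assert (H1 : (g + C * u0 x) * (u0 x - u) <= h f (u0 x / l) x * (u0 x - u)) by nra.
      assert (H2 : (u0 x - u0 x / l) * (h f u x - g) >= C * u0 x * (u0 x - u)) by nra.
      assert (H3 : C * u0 x * (u0 x - u) >= C * u0 x * (u0 x - u0 x / l)).
      { assert (0 <= C * u0 x) by nra. apply Rle_ge, Rmult_le_compat_l; lra. }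
      apply Rle_ge. apply Rplus_le_reg_l with (r := - g).
      apply Rmult_le_reg_l with (r := u0 x - u0 x / l); [lra|]. nra. }
    assert (Huu : u <= u0 x) by (unfold Rdiv in Hc'; nra).
    assert (Hfu : 0 < f u) by (apply Hp; lra).
    assert (E : ln x * (h f u x - u * f u) = (ln x - u) * h f u x + u * u) by (unfold h; ring).
    assert (ln x * (h f u x - u * f u) >= ln x * (g + d * u0 x)).
    { rewrite E. unfold d.
      assert (HLu : u0 x <= ln x) by nra.
      assert (HG : 0 <= g + C * u0 x) by nra.
      assert ((ln x - u) * h f u x >= (ln x - u) * (g + C * u0 x)).
      { apply Rle_ge, Rmult_le_compat_l; lra. }
      assert ((ln x - u) * (g + C * u0 x) >= (ln x - u0 x) * (g + C * u0 x)).
      { apply Rle_ge, Rmult_le_compat_r; lra. }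
      assert (u0 x * (g + C * u0 x) <= u0 x * (C/2 * ln x)).
      { apply Rmult_le_compat_l; [lra|]. nra. }
      nra. }
    nra.
Qed.

Lemma D_le_r f x l k dl : derivable_pt_lim f x l -> 0 < dl ->
  (forall t, 0 < t < dl -> (f (x + t) - f x) / t <= k) -> l <= k.
Proof.
  intros H Hd Hq. apply Rnot_lt_le. intro Hlt.
  assert (Heps : 0 < l - k) by lra. destruct (H _ Heps) as [del Hdel].
  assert (Hm0 : 0 < Rmin dl del) by (apply Rmin_pos; [lra|apply cond_pos]).
  set (t := Rmin dl del / 2).
  assert (Ht : 0 < t) by (unfold t; lra).
  assert (Ht1 : t < dl) by (unfold t; pose proof (Rmin_l dl del); lra).
  assert (Ht2 : t < del) by (unfold t; pose proof (Rmin_r dl del); lra).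
  assert (Hne : t <> 0) by lra.
  assert (Ha : Rabs t < del) by (rewrite Rabs_right; lra).
  specialize (Hdel t Hne Ha). apply Rabs_def2 in Hdel.
  specialize (Hq t (conj Ht Ht1)). lra.
Qed.

Lemma D_ge_r f x l k dl : derivable_pt_lim f x l -> 0 < dl ->
  (forall t, 0 < t < dl -> k <= (f (x + t) - f x) / t) -> k <= l.
Proof.
  intros H Hd Hq. apply Rnot_lt_le. intro Hlt.
  assert (Heps : 0 < k - l) by lra. destruct (H _ Heps) as [del Hdel].
  assert (Hm0 : 0 < Rmin dl del) by (apply Rmin_pos; [lra|apply cond_pos]).
  set (t := Rmin dl del / 2).
  assert (Ht : 0 < t) by (unfold t; lra).
  assert (Ht1 : t < dl) by (unfold t; pose proof (Rmin_l dl del); lra).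
  assert (Ht2 : t < del) by (unfold t; pose proof (Rmin_r dl del); lra).
  assert (Hne : t <> 0) by lra.
  assert (Ha : Rabs t < del) by (rewrite Rabs_right; lra).
  specialize (Hdel t Hne Ha). apply Rabs_def2 in Hdel.
  specialize (Hq t (conj Ht Ht1)). lra.
Qed.

Lemma D_le_l f x l k dl : derivable_pt_lim f x l -> 0 < dl ->
  (forall t, - dl < t < 0 -> (f (x + t) - f x) / t <= k) -> l <= k.
Proof.
  intros H Hd Hq. apply Rnot_lt_le. intro Hlt.
  assert (Heps : 0 < l - k) by lra. destruct (H _ Heps) as [del Hdel].
  assert (Hm0 : 0 < Rmin dl del) by (apply Rmin_pos; [lra|apply cond_pos]).
  set (t := - (Rmin dl del / 2)).
  assert (Ht : t < 0) by (unfold t; lra).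
  assert (Ht1 : - dl < t) by (unfold t; pose proof (Rmin_l dl del); lra).
  assert (Ht2 : - t < del) by (unfold t; pose proof (Rmin_r dl del); lra).
  assert (Hne : t <> 0) by lra.
  assert (Ha : Rabs t < del) by (rewrite Rabs_left; lra).
  specialize (Hdel t Hne Ha). apply Rabs_def2 in Hdel.
  specialize (Hq t (conj Ht1 Ht)). lra.
Qed.

Lemma D_ge_l f x l k dl : derivable_pt_lim f x l -> 0 < dl ->
  (forall t, - dl < t < 0 -> k <= (f (x + t) - f x) / t) -> k <= l.
Proof.
  intros H Hd Hq. apply Rnot_lt_le. intro Hlt.
  assert (Heps : 0 < k - l) by lra. destruct (H _ Heps) as [del Hdel].
  assert (Hm0 : 0 < Rmin dl del) by (apply Rmin_pos; [lra|apply cond_pos]).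
  set (t := - (Rmin dl del / 2)).
  assert (Ht : t < 0) by (unfold t; lra).
  assert (Ht1 : - dl < t) by (unfold t; pose proof (Rmin_l dl del); lra).
  assert (Ht2 : - t < del) by (unfold t; pose proof (Rmin_r dl del); lra).
  assert (Hne : t <> 0) by lra.
  assert (Ha : Rabs t < del) by (rewrite Rabs_left; lra).
  specialize (Hdel t Hne Ha). apply Rabs_def2 in Hdel.
  specialize (Hq t (conj Ht1 Ht)). lra.
Qed.

Lemma div_le_pos A t k : 0 < t -> A <= k * t -> A / t <= k.
Proof. intros Ht H. unfold Rdiv. apply Rmult_le_reg_r with t; [lra|].
  rewrite Rmult_assoc, Rinv_l, Rmult_1_r; lra. Qed.
Lemma div_ge_pos A t k : 0 < t -> k * t <= A -> k <= A / t.
Proof. intros Ht H. unfold Rdiv. apply Rmult_le_reg_r with t; [lra|].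
  rewrite Rmult_assoc, Rinv_l, Rmult_1_r; lra. Qed.
Lemma div_le_neg A t k : t < 0 -> k * t <= A -> A / t <= k.
Proof. intros Ht H. unfold Rdiv. apply Rmult_le_reg_r with (-t); [lra|].
  replace (A * / t * - t) with (- A) by (field; lra). lra. Qed.
Lemma div_ge_neg A t k : t < 0 -> A <= k * t -> k <= A / t.
Proof. intros Ht H. unfold Rdiv. apply Rmult_le_reg_r with (-t); [lra|].
  replace (A * / t * - t) with (- A) by (field; lra). lra. Qed.
Lemma div_le_inv A t k : 0 < t -> A / t <= k -> A <= k * t.
Proof. intros Ht H. apply Rmult_le_compat_r with (r := t) in H; [|lra].
  unfold Rdiv in H. rewrite Rmult_assoc, Rinv_l, Rmult_1_r in H; lra. Qed.

Lemma tangent f a x y D : ConvG f a -> a < x -> a < y -> derivable_pt_lim f x D ->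
  f x + D * (y - x) <= f y.
Proof.
  intros Hc Hx Hy HD.
  destruct (Rtotal_order x y) as [Hxy|[<-|Hxy]].
  - set (k := (f y - f x) / (y - x)).
    assert (Hdl : 0 < y - x) by lra.
    assert (Hk : D <= k).
    { apply (D_le_r f x D k (y - x) HD Hdl). intros t Ht.
      apply div_le_pos; [lra|].
      set (th := 1 - t / (y - x)).
      assert (Hth : 0 <= th <= 1).
      { unfold th. split.
        - assert (t / (y - x) <= 1) by (apply div_le_pos; lra). lra.
        - assert (0 <= t / (y - x)) by (apply div_ge_pos; lra). lra. }
      pose proof (Hc x y th Hx Hy Hth) as H.
      replace (th * x + (1 - th) * y) with (x + t) in H by (unfold th; field; lra).
      replace (k * t) with (t / (y - x) * (f y - f x)) by (unfold k; field; lra).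
      unfold th in H. lra. }
    assert (D * (y - x) <= k * (y - x)) by (apply Rmult_le_compat_r; lra).
    replace (k * (y - x)) with (f y - f x) in H by (unfold k; field; lra). lra.
  - lra.
  - set (k := (f x - f y) / (x - y)).
    assert (Hdl : 0 < x - y) by lra.
    assert (Hk : k <= D).
    { apply (D_ge_l f x D k (x - y) HD Hdl). intros t Ht.
      apply div_ge_neg; [lra|].
      set (th := 1 + t / (x - y)).
      assert (Hth : 0 <= th <= 1).
      { unfold th. split.
        - assert (-1 <= t / (x - y)).
          { apply div_ge_pos; lra. }
          lra.
        - assert (t / (x - y) <= 0) by (apply div_le_pos; lra). lra. }
      pose proof (Hc x y th Hx Hy Hth) as H.
      replace (th * x + (1 - th) * y) with (x + t) in H by (unfold th; field; lra).
      replace (k * t) with (- t / (x - y) * (f y - f x)) by (unfold k; field; lra).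
      unfold th in H. lra. }
    assert (k * (x - y) <= D * (x - y)) by (apply Rmult_le_compat_r; lra).
    replace (k * (x - y)) with (f x - f y) in H by (unfold k; field; lra). lra.
Qed.

Lemma min_deriv f u0 X x D : Setup f u0 X -> X <= x -> 0 < u0 x ->
  derivable_pt_lim f (u0 x) D -> D * ln x = -1.
Proof.
  intros S Hx Hu HD. destruct S as (HX&Hp&Hm&Hf).
  pose proof (lnpos x X HX Hx) as HL.
  destruct (Hm x Hx) as [_ Hmin].
  assert (Hin : forall t, - u0 x < t -> (f (u0 x + t) - f (u0 x)) * ln x >= - t).
  { intros t Ht. specialize (Hmin (u0 x + t) ltac:(lra)). unfold h in Hmin. lra. }
  assert (H1 : - / ln x <= D).
  { apply (D_ge_r f (u0 x) D (- / ln x) 1 HD ltac:(lra)). intros t Ht.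
    apply div_ge_pos; [lra|]. specialize (Hin t ltac:(lra)).
    apply Rmult_le_reg_r with (ln x); [lra|].
    replace (- / ln x * t * ln x) with (- t) by (field; lra). lra. }
  assert (H2 : D <= - / ln x).
  { apply (D_le_l f (u0 x) D (- / ln x) (u0 x) HD Hu). intros t Ht.
    apply div_le_neg; [lra|]. specialize (Hin t ltac:(lra)).
    apply Rmult_le_reg_r with (ln x); [lra|].
    replace (- / ln x * t * ln x) with (- t) by (field; lra). lra. }
  assert (D = - / ln x) by lra. subst D. field. lra.
Qed.

Definition CoreC (f u0 : R -> R) X l a := exists C, 0 < C /\ exists x2, X <= x2 /\ forall x, x2 <= x ->
     a < u0 x / l /\ h f (l * u0 x) x >= h f (u0 x) x + C * u0 x /\
     h f (u0 x / l) x >= h f (u0 x) x + C * u0 x.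

Lemma dpl f u : ex_derive f u -> derivable_pt_lim f u (Derive f u).
Proof. intros H. apply is_derive_Reals. apply Derive_correct. exact H. Qed.

Lemma deriv_neg f a v : ConvG f a -> (forall s t, a < s -> s < t -> f t < f s) ->
  a < v -> ex_derive f v -> Derive f v < 0.
Proof.
  intros Hc Hd Hv He. assert (Hv1 : a < v + 1) by lra. assert (Hv2 : v < v + 1) by lra.
  pose proof (tangent f a v (v+1) _ Hc Hv Hv1 (dpl f v He)).
  pose proof (Hd v (v+1) Hv Hv2). lra.
Qed.

Lemma Ev_lemma f u0 X : Setup f u0 X -> (forall M, exists x, X <= x /\ M <= u0 x) ->
  forall M, exists x1, X <= x1 /\ forall x, x1 <= x -> M <= u0 x.
Proof.
  intros S Unb M. destruct (Unb M) as [x1 [H1 H2]]. exists x1. split; auto.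
  intros x Hx. pose proof (F1 _ _ _ _ _ S H1 Hx). lra.
Qed.

Lemma core2 f u0 X l a : Setup f u0 X -> 1 < l -> 0 <= a -> ConvG f a ->
  (forall s t, a < s -> s < t -> f t < f s) -> (forall u, a < u -> ex_derive f u) ->
  (forall d, 0 < d -> exists c, c < 1 /\ exists U, forall u, U <= u ->
          Rabs (Derive f ((1 + d) * u)) / Rabs (Derive f u) <= c) ->
  (forall M, exists x, X <= x /\ M <= u0 x) -> CoreC f u0 X l a.
Proof.
  intros S Hl Ha Hc Hd Hex Hrat Unb.
  set (d2 := (l-1)/2).
  assert (Hd2 : 0 < d2) by (unfold d2; lra).
  destruct (Hrat d2 Hd2) as [c [Hc1 [U HU]]].
  set (B := Rmax a U).
  destruct (Ev_lemma _ _ _ S Unb (l * B + l)) as [x2 [Hx2 HE]].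
  exists ((1-c) * d2 / ((1+d2) * l)). split.
  { apply Rdiv_lt_0_compat; nra. }
  exists x2. split; [exact Hx2|]. intros x Hx.
  specialize (HE x Hx).
  assert (HXx : X <= x) by lra.
  pose proof S as (HX&Hp&Hm&Hf).
  pose proof (lnpos x X HX HXx) as HL.
  set (u := u0 x) in *. set (L := ln x) in *.
  assert (HaB : a <= B) by apply Rmax_l. assert (HUB : U <= B) by apply Rmax_r.
  assert (Hul : B + 1 <= u / l).
  { apply div_ge_pos; lra. }
  assert (Hu_l : u / l <= u).
  { apply div_le_pos; [lra|]. assert (0 <= B) by lra. assert (0 <= l * B) by (apply Rmult_le_pos; lra).
    assert (0 <= u * (l - 1)) by (apply Rmult_le_pos; lra). lra. }
  assert (Hua : a < u) by lra.
  assert (Hu0 : 0 < u) by lra.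
  pose proof (min_deriv f u0 X x (Derive f u) S HXx Hu0 (dpl f u (Hex u Hua))) as HD0.
  fold u L in HD0.
  pose proof (deriv_neg f a u Hc Hd Hua (Hex u Hua)) as HD0n.
  destruct (Hm x HXx) as [_ Hmin]. fold u in Hmin.
  split; [lra|]. split.
  -
    set (s := (1 + d2) * u).
    assert (Hs : u <= s) by (unfold s; nra).
    assert (Hsa : a < s) by lra.
    pose proof (deriv_neg f a s Hc Hd Hsa (Hex s Hsa)) as HDsn.
    assert (HUu : U <= u) by lra. specialize (HU u HUu). fold s in HU.
    rewrite (Rabs_left _ HDsn), (Rabs_left _ HD0n) in HU.
    apply div_le_inv in HU; [|lra].
    assert (Hlu : a < l * u) by nra.
    pose proof (tangent f a s (l * u) _ Hc Hsa Hlu (dpl f s (Hex s Hsa))) as HT.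
    assert (Hs0 : 0 <= s) by lra. specialize (Hmin s Hs0). unfold h in Hmin |- *. fold L.
    assert (E1 : l * u - s = d2 * u) by (unfold s, d2; field).
    rewrite E1 in HT.
    assert (HDL : Derive f s * L >= - c) by nra.
    assert (HT' : f (l * u) * L >= f s * L + Derive f s * L * (d2 * u)).
    { nra. }
    assert (Derive f s * L * (d2 * u) >= - c * (d2 * u)).
    { apply Rle_ge, Rmult_le_compat_r; nra. }
    assert (HC : (1-c) * d2 / ((1+d2) * l) * u <= (1-c) * d2 * u).
    { apply Rmult_le_compat_r; [lra|]. apply div_le_pos; [nra|].
      assert (1 <= (1+d2)*l) by nra. assert (0 < (1-c)*d2) by nra.
      assert ((1-c)*d2 * 1 <= (1-c)*d2 * ((1+d2)*l)) by (apply Rmult_le_compat_l; lra). lra. }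
    fold L in Hmin. lra.
  -
    set (w := u / (1 + d2)).
    assert (Hw : u / l <= w).
    { unfold w. unfold Rdiv. apply Rmult_le_compat_l; [lra|]. apply Rinv_le_contravar; unfold d2; lra. }
    assert (Hwa : a < w) by lra.
    pose proof (deriv_neg f a w Hc Hd Hwa (Hex w Hwa)) as HDwn.
    assert (HUw : U <= w) by lra. specialize (HU w HUw).
    replace ((1 + d2) * w) with u in HU by (unfold w; field; lra).
    rewrite (Rabs_left _ HDwn), (Rabs_left _ HD0n) in HU.
    apply div_le_inv in HU; [|lra].
    assert (Hula : a < u / l) by lra.
    pose proof (tangent f a w (u / l) _ Hc Hwa Hula (dpl f w (Hex w Hwa))) as HT.
    assert (Hw0 : 0 <= w) by lra. specialize (Hmin w Hw0). unfold h in Hmin |- *. fold L. fold L in Hmin.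
    set (Y := - Derive f w * L).
    assert (HY : 0 < Y) by (unfold Y; nra).
    assert (HcY : 1 <= c * Y) by (unfold Y; nra).
    assert (Hc0 : 0 < c) by nra.
    assert (HY2 : 2 - c <= Y) by nra.
    assert (HT' : f (u / l) * L >= f w * L + Y * (w - u / l)).
    { unfold Y. nra. }
    assert (Y * (w - u / l) >= (2 - c) * (w - u / l)).
    { apply Rle_ge, Rmult_le_compat_r; lra. }
    assert (E2 : w - u / l = d2 / ((1 + d2) * l) * u) by (unfold w, d2; field; repeat split; lra).
    assert (E3 : (1-c) * d2 / ((1+d2) * l) * u = (1 - c) * (w - u / l)) by (rewrite E2; field; unfold d2; repeat split; lra).
    rewrite E3. nra.
Qed.

Lemma lim_bounds (f : R -> R) lam v : (forall u, 0 <= u -> 0 < f u) ->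
  is_lim (fun u => f (lam * u) / f u) p_infty (Finite v) ->
  forall eps, 0 < eps -> exists M, 0 <= M /\ forall u, M <= u ->
    (v - eps) * f u <= f (lam * u) <= (v + eps) * f u.
Proof.
  intros Hp Hl eps He. destruct (lim_eps _ _ Hl eps He) as [M HM].
  exists (Rmax M 0). split; [apply Rmax_r|]. intros u Hu.
  assert (Hu0 : 0 <= u) by (eapply Rle_trans; [apply Rmax_r|exact Hu]).
  assert (HMu : M <= u) by (eapply Rle_trans; [apply Rmax_l|exact Hu]).
  specialize (HM u HMu). apply Rabs_def2 in HM. destruct HM as [H1 H2].
  pose proof (Hp u Hu0) as Hf.
  split.
  - assert (v - eps <= f (lam * u) / f u) by lra.
    apply Rmult_le_compat_r with (r := f u) in H; [|lra].
    unfold Rdiv in H. rewrite Rmult_assoc, Rinv_l, Rmult_1_r in H; lra.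
  - apply div_le_inv; lra.
Qed.

Lemma core1 f u0 X l a alpha : Setup f u0 X -> 1 < l -> 0 <= a -> 0 < alpha ->
  (forall lam, 0 < lam ->
     is_lim (fun u => f (lam * u) / f u) p_infty (Finite (Rpower lam (- alpha)))) ->
  (forall M, exists x, X <= x /\ M <= u0 x) -> CoreC f u0 X l a.
Proof.
  intros S Hl Ha Hal Hlim Unb.
  pose proof S as (HX&Hp&Hm&Hf).
  set (s := sqrt l).
  assert (Hs1 : 1 < s). { unfold s. rewrite <- sqrt_1. apply sqrt_lt_1_alt. lra. }
  assert (Hss : s * s = l) by (unfold s; apply sqrt_sqrt; lra).
  assert (Hlnl : 0 < ln l) by (rewrite <- ln_1; apply ln_increasing; lra).
  assert (Hlns : ln l = 2 * ln s).
  { rewrite <- Hss, ln_mult; lra. }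
  set (beta := alpha * ln l / 2).
  assert (Hb : 0 < beta) by (unfold beta; nra).
  set (q := exp (- beta)). set (Q := exp beta).
  assert (HqQ : q * Q = 1).
  { unfold q, Q. rewrite <- exp_plus. replace (- beta + beta) with 0 by ring. apply exp_0. }
  assert (Hq0 : 0 < q) by apply exp_pos.
  assert (Hq1 : q < 1). { unfold q. rewrite <- exp_0. apply exp_increasing. lra. }
  assert (HQ1 : 1 < Q). { unfold Q. rewrite <- exp_0. apply exp_increasing. lra. }
  set (is := / s).
  assert (Hiss : s * is = 1) by (unfold is; field; lra).
  assert (His0 : 0 < is) by (unfold is; apply Rinv_0_lt_compat; lra).
  assert (His1 : is < 1) by nra.
  assert (R1 : Rpower s (- alpha) = q).
  { unfold Rpower, q, beta. f_equal. rewrite Hlns. field. }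
  assert (R2 : Rpower l (- alpha) = q * q).
  { unfold Rpower, q, beta. rewrite <- exp_plus. f_equal. field. }
  assert (R3 : Rpower is (- alpha) = Q).
  { unfold Rpower, Q, beta, is. rewrite ln_Rinv by lra. f_equal. rewrite Hlns. field. }
  assert (R4 : Rpower (is * is) (- alpha) = Q * Q).
  { unfold Rpower, Q, beta, is. rewrite <- exp_plus. rewrite ln_mult by (apply Rinv_0_lt_compat; lra).
    rewrite ln_Rinv by lra. f_equal. rewrite Hlns. field. }
  set (m := (s - q) / 2). set (Dq := 1 - q).
  set (m' := (Q - is) / 2).
  assert (Hmpos : 0 < m) by (unfold m; lra).
  assert (Hmpos' : 0 < m') by (unfold m'; lra).
  set (eu := m * Dq / (2 + q + m)).
  set (el := m' * (Q - 1) / (Q + 2)).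
  assert (Heu : 0 < eu) by (unfold eu, Dq; apply Rdiv_lt_0_compat; nra).
  assert (Hel : 0 < el) by (unfold el; apply Rdiv_lt_0_compat; nra).
  set (eps := Rmin eu el).
  assert (He : 0 < eps) by (apply Rmin_pos; lra).
  assert (Heu' : eps * (2 + q + m) <= m * Dq).
  { assert (eps <= eu) by apply Rmin_l.
    replace (m * Dq) with (eu * (2 + q + m)) by (unfold eu; field; lra).
    apply Rmult_le_compat_r; lra. }
  assert (Hel' : eps * (Q + 2) <= m' * (Q - 1)).
  { assert (eps <= el) by apply Rmin_r.
    replace (m' * (Q - 1)) with (el * (Q + 2)) by (unfold el; field; lra).
    apply Rmult_le_compat_r; lra. }
  assert (Hs0 : 0 < s) by lra.
  assert (Hl0 : 0 < l) by lra.
  assert (Hil0 : 0 < is * is) by nra.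
  destruct (lim_bounds f s _ Hp (Hlim s Hs0) eps He) as [M1 [_ HM1]].
  destruct (lim_bounds f l _ Hp (Hlim l Hl0) eps He) as [M2 [_ HM2]].
  destruct (lim_bounds f is _ Hp (Hlim is His0) eps He) as [M3 [_ HM3]].
  destruct (lim_bounds f (is * is) _ Hp (Hlim (is*is) Hil0) eps He) as [M4 [_ HM4]].
  rewrite R1 in HM1. rewrite R2 in HM2. rewrite R3 in HM3. rewrite R4 in HM4.
  destruct (Ev_lemma _ _ _ S Unb (Rmax (Rmax (Rmax M1 M2) (Rmax M3 M4)) (l * (a + 1))))
    as [x2 [Hx2 HE]].
  exists (Rmin ((s - 1) * m) ((1 - is) * m')). split.
  { apply Rmin_pos; nra. }
  exists x2. split; [exact Hx2|]. intros x Hx.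
  specialize (HE x Hx).
  assert (HXx : X <= x) by lra.
  pose proof (lnpos x X HX HXx) as HL.
  set (u := u0 x) in *. set (L := ln x) in *.
  assert (HM1u : M1 <= u) by (do 3 apply Rmax_le_l in HE; exact HE).
  assert (HM2u : M2 <= u) by (do 2 apply Rmax_le_l in HE; apply Rmax_le_r in HE; exact HE).
  assert (HM3u : M3 <= u) by (apply Rmax_le_l, Rmax_le_r, Rmax_le_l in HE; exact HE).
  assert (HM4u : M4 <= u) by (apply Rmax_le_l, Rmax_le_r, Rmax_le_r in HE; exact HE).
  assert (Hau : l * (a + 1) <= u) by (apply Rmax_le_r in HE; exact HE).
  assert (Hu0 : 0 < u) by nra.
  assert (Hul : u / l = is * is * u).
  { unfold is. rewrite <- Hss. field. lra. }
  specialize (HM1 u HM1u). specialize (HM2 u HM2u).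
  specialize (HM3 u HM3u). specialize (HM4 u HM4u).
  pose proof (Hp u ltac:(lra)) as HF.
  set (Y := f u * L).
  assert (HY : 0 < Y) by (unfold Y; nra).
  destruct (Hm x HXx) as [_ Hmin]. fold u in Hmin. unfold h in Hmin |- *. fold L in Hmin |- *. fold Y in Hmin.
  assert (HCl : Rmin ((s - 1) * m) ((1 - is) * m') <= (s - 1) * m) by apply Rmin_l.
  assert (HCr : Rmin ((s - 1) * m) ((1 - is) * m') <= (1 - is) * m') by apply Rmin_r.
  set (C := Rmin ((s - 1) * m) ((1 - is) * m')) in *.
  assert (HCu1 : C * u <= (s - 1) * m * u) by (apply Rmult_le_compat_r; lra).
  assert (HCu2 : C * u <= (1 - is) * m' * u) by (apply Rmult_le_compat_r; lra).
  split; [|split].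
  - rewrite Hul. apply Rlt_le_trans with (1 * (a + 1)); [lra|].
    replace (is * is * u) with (u / l) by (rewrite Hul; ring).
    apply div_ge_pos; lra.
  -
    assert (Hsu : 0 <= s * u) by nra.
    specialize (Hmin (s * u) Hsu).
    assert (A1 : f (s * u) * L <= (q + eps) * Y) by (unfold Y; nra).
    assert (A2 : (q * q - eps) * Y <= f (l * u) * L) by (unfold Y; nra).
    assert (A3 : Y * (1 - q - eps) <= (s - 1) * u) by nra.
    assert (K : 1 - q * q + eps <= (1 + q + m) * (1 - q - eps)) by (unfold Dq in Heu'; nra).
    assert (A4 : Y * (1 - q * q + eps) <= (1 + q + m) * ((s - 1) * u)).
    { apply Rle_trans with (Y * ((1 + q + m) * (1 - q - eps))).
      - apply Rmult_le_compat_l; lra.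
      - replace (Y * ((1 + q + m) * (1 - q - eps))) with ((1 + q + m) * (Y * (1 - q - eps))) by ring.
        apply Rmult_le_compat_l; lra. }
    assert (E : l - 1 - (1 + q + m) * (s - 1) = (s - 1) * m) by (rewrite <- Hss; unfold m; field).
    assert (E' : l * u - u - (1 + q + m) * ((s - 1) * u) = (s - 1) * m * u).
    { replace (l * u - u - (1 + q + m) * ((s - 1) * u)) with ((l - 1 - (1 + q + m) * (s - 1)) * u) by ring.
      rewrite E. ring. }
    apply Rle_ge. fold Y. nra.
  -
    assert (Hsu : 0 <= is * u) by nra.
    specialize (Hmin (is * u) Hsu).
    rewrite Hul.
    assert (A1 : f (is * u) * L <= (Q + eps) * Y) by (unfold Y; nra).
    assert (A2 : (Q * Q - eps) * Y <= f (is * is * u) * L) by (unfold Y; nra).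
    assert (A3 : (1 - is) * u <= Y * (Q - 1 + eps)) by nra.
    assert (K : (1 + Q - m') * (Q - 1 + eps) <= Q * Q - 1 - eps) by nra.
    assert (Hpos' : 0 <= 1 + Q - m') by (unfold m'; lra).
    assert (A4 : (1 + Q - m') * ((1 - is) * u) <= Y * (Q * Q - 1 - eps)).
    { apply Rle_trans with ((1 + Q - m') * (Y * (Q - 1 + eps))).
      - apply Rmult_le_compat_l; lra.
      - replace ((1 + Q - m') * (Y * (Q - 1 + eps))) with (Y * ((1 + Q - m') * (Q - 1 + eps))) by ring.
        apply Rmult_le_compat_l; lra. }
    assert (E : (1 + Q - m') * (1 - is) + is * is - 1 = (1 - is) * m') by (unfold m'; field).
    assert (E' : (1 + Q - m') * ((1 - is) * u) + is * is * u - u = (1 - is) * m' * u).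
    { replace ((1 + Q - m') * ((1 - is) * u) + is * is * u - u) with (((1 + Q - m') * (1 - is) + is * is - 1) * u) by ring.
      rewrite E. ring. }
    apply Rle_ge. fold Y. nra.
Qed.
Theorem lemma2p1 (f u0 : R -> R)
  (Hpos : forall u, 0 <= u -> 0 < f u)
  (Hlim : is_lim f p_infty (Finite 0))
  (HC1 : exists a, forall u, a < u -> ex_derive f u /\ continuous (Derive f) u)
  (Hdec : exists a, forall s t, a < s -> s < t -> f t < f s)
  (Hconv : exists a, forall s t th, a < s -> s < t -> 0 < th < 1 ->
             f (th * s + (1 - th) * t) < th * f s + (1 - th) * f t)
  (Hvar :
     (exists alpha, 0 < alpha <= 1 /\
        forall l, 0 < l ->
          is_lim (fun u => f (l * u) / f u) p_infty (Finite (Rpower l (- alpha))))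
     \/
     ((forall l, 0 < l -> is_lim (fun u => f (l * u) / f u) p_infty (Finite 1)) /\
      (* limsup_{u->oo} |f'((1+d)u)| / |f'(u)| < 1, written out *)
      forall d, 0 < d -> exists c, c < 1 /\ exists U, forall u, U <= u ->
          Rabs (Derive f ((1 + d) * u)) / Rabs (Derive f u) <= c))
  (* standing convention: for x large, u0 x is the unique minimiser of h(.,x) on [0,oo) *)
  (Hu0 : exists X, forall x, X <= x ->
           is_min_h f x (u0 x) /\ (forall v, is_min_h f x v -> v = u0 x)) :
  forall l, 1 < l ->
    exists d, 0 < d /\ exists x0, 1 <= x0 /\
      forall x u, x0 <= x -> 0 <= u ->
        (l * u0 x <= u \/ u <= u0 x / l) ->
        h f u x - u * f u >= omega f x + d * u0 x.
Proof.
  intros l Hl.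
  destruct Hu0 as [X0 HX0].
  set (X := Rmax X0 2).
  assert (S : Setup f u0 X).
  { split; [unfold X; pose proof (Rmax_r X0 2); lra|]. split; [exact Hpos|]. split.
    - intros x Hx. apply HX0. eapply Rle_trans; [apply Rmax_l|exact Hx].
    - intros eps He. destruct (lim_eps f 0 Hlim eps He) as [M HM]. exists M.
      intros u Hu. specialize (HM u Hu). apply Rabs_def2 in HM. lra. }
  destruct HC1 as [a1 Ha1]. destruct Hdec as [a2 Ha2]. destruct Hconv as [a3 Ha3].
  set (a := Rmax (Rmax a1 a2) (Rmax a3 0)).
  assert (Ha1' : a1 <= a) by (unfold a; eapply Rle_trans; [|apply Rmax_l]; apply Rmax_l).
  assert (Ha2' : a2 <= a) by (unfold a; eapply Rle_trans; [|apply Rmax_l]; apply Rmax_r).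
  assert (Ha3' : a3 <= a) by (unfold a; eapply Rle_trans; [|apply Rmax_r]; apply Rmax_l).
  assert (Ha0 : 0 <= a) by (unfold a; eapply Rle_trans; [|apply Rmax_r]; apply Rmax_r).
  assert (Hc : ConvG f a).
  { apply conv_general. intros s t th Hs Hst Hth. apply Ha3; auto; lra. }
  assert (Hd : forall s t, a < s -> s < t -> f t < f s).
  { intros s t Hs Hst. apply Ha2; auto; lra. }
  assert (Hex : forall u, a < u -> ex_derive f u).
  { intros u Hu. apply Ha1. lra. }
  assert (Cn : Concl f u0 X l).
  { destruct (Classical_Prop.classic (forall M, exists x, X <= x /\ M <= u0 x)) as [Unb|Nb].
    - apply (unbounded_case f u0 X l a S Hl Ha0 Hc Unb).
      destruct Hvar as [[alpha [[Hal _] Hlm]]|[_ Hrat]].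
      + exact (core1 f u0 X l a alpha S Hl Ha0 Hal Hlm Unb).
      + exact (core2 f u0 X l a S Hl Ha0 Hc Hd Hex Hrat Unb).
    - apply (bounded_case f u0 X l S Hl).
      apply Classical_Pred_Type.not_all_ex_not in Nb. destruct Nb as [M HM].
      exists M. intros x Hx. apply Rnot_lt_le. intro Hlt. apply HM. exists x. split; lra. }
  destruct Cn as [d [Hd0 [x0 [Hx01 [HXx0 Hmain]]]]].
  exists d. split; [exact Hd0|]. exists x0. split; [exact Hx01|].
  intros x u Hx Hu Hcase.
  assert (HXx : X <= x) by lra.
  destruct S as (_&_&Hm&_).
  rewrite (omega_eq f x (u0 x) (Hm x HXx)).
  apply Hmain; auto.
Qed.
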